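(* Let $\theta$ be a quadratic irrational with $0<\theta<1$ and $\overline{\theta}<0$ (where $\overline{\theta}$ is the algebraic conjugate of $\theta$), and let $\rho\in\mathbb{R}$ with $0 \le \rho \le 1+\theta$. Let $\mathbf{u}$ be a Sturmian word with parameters $\ell_0 = 1, \ell_1 = \theta, \rho$, or with parameters $\ell_0 = \theta, \ell_1 = 1, \rho$. (1) If $\rho = \ell_1$, then $\mathbf{u}$ is fixed by a primitive morphism $\varphi_w$ with $w\in\{b,\beta\}^*$. (2) If $\rho = 0$, then $\mathbf{u}$ is fixed by a primitive morphism $\varphi_w$ with $w\in\{b,\alpha\}^*$. (3) If $\rho = \ell_0+\ell_1$, then $\mathbf{u}$ is fixed by a primitive morphism $\varphi_w$ with $w\in\{a,\beta\}^*$. (4) If $\rho = \ell_0$, then $\mathbf{u}$ is fixed by a primitive morphism $\varphi_w$ with $w\in\{a,\alpha\}^*$.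
   Context: Morphisms on $\{0,1\}^*$: $\varphi_a: 0\mapsto 0, 1 \mapsto 10$; $\varphi_b: 0 \mapsto 0, 1\mapsto 01$; $\varphi_\alpha: 0\mapsto 01, 1\mapsto 1$; $\varphi_\beta: 0\mapsto 10, 1 \mapsto 1$; for $w=w_0\cdots w_{m-1}$, $\varphi_w = \varphi_{w_0}\circ\cdots\circ\varphi_{w_{m-1}}$. A morphism is primitive if some power maps every letter to a word containing every letter. Two interval exchange words: given $\ell_0,\ell_1>0$, take either $I=[0,\ell_0+\ell_1)$, $I_0=[0,\ell_0)$, $I_1=[\ell_0,\ell_0+\ell_1)$ (lower case) or $I=(0,\ell_0+\ell_1]$, $I_0=(0,\ell_0]$, $I_1=(\ell_0,\ell_0+\ell_1]$ (upper case); $T(x)=x+\ell_1$ on $I_0$, $T(x)=x-\ell_0$ on $I_1$; for $\rho\in I$, $u_n = 0$ if $T^n(\rho)\in I_0$ and $u_n=1$ otherwise. With $\ell_1/(\ell_0+\ell_1)$ irrational these are the Sturmian words; ''Sturmian word with parameters $\ell_0,\ell_1,\rho$'' means such a lower or upper coding. *)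

(* Defs.v *)
From Stdlib Require Import Reals ZArith.
From mathcomp Require Import all_boot.

Set Implicit Arguments.
Unset Strict Implicit.
Unset Printing Implicit Defensive.

(* Letters 0 and 1 are encoded as false and true respectively. *)
Definition morphism := bool -> seq bool.

Definition mapply (f : morphism) (s : seq bool) : seq bool := flatten (map f s).

Definition mcomp (f g : morphism) : morphism := fun x => mapply f (g x).

Definition mid : morphism := fun x => [:: x].

Inductive mletter := La | Lb | Lalpha | Lbeta.

Definition mletter_eqb (x y : mletter) : bool :=
  match x, y with
  | La, La | Lb, Lb | Lalpha, Lalpha | Lbeta, Lbeta => true
  | _, _ => false
  end.

(* phi_a: 0->0, 1->10 ; phi_b: 0->0, 1->01 ;
   phi_alpha: 0->01, 1->1 ; phi_beta: 0->10, 1->1 *)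
Definition phi_letter (c : mletter) : morphism :=
  match c with
  | La => fun x => if x then [:: true; false] else [:: false]
  | Lb => fun x => if x then [:: false; true] else [:: false]
  | Lalpha => fun x => if x then [:: true] else [:: false; true]
  | Lbeta => fun x => if x then [:: true] else [:: true; false]
  end.

Definition phi_word (w : seq mletter) : morphism :=
  foldr (fun c acc => mcomp (phi_letter c) acc) mid w.

Definition mpow (f : morphism) (k : nat) : morphism := iter k (mcomp f) mid.

Definition primitive_morphism (f : morphism) : Prop :=
  exists k : nat, forall x y : bool, y \in mpow f k x.

(* An infinite word u is fixed by f: f(u) = u, i.e. the image of every prefix
   of u is a prefix of u (for a nonerasing morphism such as every phi_w this
   is exactly f(u) = u). *)
Definition fixed_by (f : morphism) (u : nat -> bool) : Prop :=
  forall n : nat, let s := mapply f (mkseq u n) in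
    forall i : nat, i < size s -> nth false s i = u i.

Definition word_over (A : seq mletter) (w : seq mletter) : bool :=
  all (fun c => has (mletter_eqb c) A) w.

Open Scope R_scope.

Definition irrational (x : R) : Prop :=
  ~ exists p q : Z, q <> 0%Z /\ x = IZR p / IZR q.

(* x is an irrational root of a x^2 + b x + c with integers a <> 0, and the
   other root of that polynomial, -b/a - x, is xbar. *)
Definition quad_irrational_with_conj (x xbar : R) : Prop :=
  irrational x /\
  exists a b c : Z, a <> 0%Z /\
    IZR a * x ^ 2 + IZR b * x + IZR c = 0 /\
    xbar = - (IZR b / IZR a) - x.

(* Lower case: I = [0, l0+l1), I0 = [0, l0), I1 = [l0, l0+l1). *)
Definition T_lower (l0 l1 : R) (x : R) : R :=
  if Rlt_dec x l0 then x + l1 else x - l0.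
Definition coding_lower (l0 l1 rho : R) (n : nat) : bool :=
  let y := iter n (T_lower l0 l1) rho in
  if Rle_dec 0 y then (if Rlt_dec y l0 then false else true) else true.

(* Upper case: I = (0, l0+l1], I0 = (0, l0], I1 = (l0, l0+l1]. *)
Definition T_upper (l0 l1 : R) (x : R) : R :=
  if Rle_dec x l0 then x + l1 else x - l0.
Definition coding_upper (l0 l1 rho : R) (n : nat) : bool :=
  let y := iter n (T_upper l0 l1) rho in
  if Rlt_dec 0 y then (if Rle_dec y l0 then false else true) else true.

Definition sturmian_param (l0 l1 rho : R) (u : nat -> bool) : Prop :=
  (0 <= rho < l0 + l1 /\ forall n, u n = coding_lower l0 l1 rho n) \/
  (0 < rho <= l0 + l1 /\ forall n, u n = coding_upper l0 l1 rho n).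

Close Scope R_scope.

(* Main.v *)
Require Import Defs.
From Stdlib Require Import Reals ZArith Lra Lia Psatz Classical.
From mathcomp Require Import all_boot.
Set Implicit Arguments.
Unset Strict Implicit.

Definition imgp (f : morphism) (v u : nat -> bool) : Prop :=
  forall n i, i < size (mapply f (mkseq v n)) ->
    nth false (mapply f (mkseq v n)) i = u i.

Lemma mapply_cons f a s : mapply f (a :: s) = f a ++ mapply f s.
Proof. by []. Qed.

Lemma mapply_cat f s t : mapply f (s ++ t) = mapply f s ++ mapply f t.
Proof. by rewrite /mapply map_cat flatten_cat. Qed.

Lemma mapply_comp f g s : mapply (mcomp f g) s = mapply f (mapply g s).
Proof.
elim: s => [|a s IH] //=.
by rewrite mapply_cons IH mapply_cons mapply_cat.
Qed.

Lemma mkseq_cons (v : nat -> bool) n : mkseq v n.+1 = v 0 :: mkseq (fun k => v k.+1) n.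
Proof. rewrite /mkseq /=; congr cons; rewrite -(addn0 1) iotaDl -map_comp; exact: eq_map. Qed.

Lemma imgp_ext f v v' u u' : imgp f v u -> v =1 v' -> u =1 u' -> imgp f v' u'.
Proof.
move=> H Hv Hu n i; rewrite -(eq_mkseq Hv) -Hu; exact: H.
Qed.

Lemma imgp_comp f g t v u : imgp f v u -> imgp g t v -> imgp (mcomp f g) t u.
Proof.
move=> Hf Hg n i; rewrite mapply_comp.
set s' := mapply g (mkseq t n).
have -> : s' = mkseq v (size s').
  apply: (@eq_from_nth _ false); first by rewrite size_mkseq.
  move=> k Hk; rewrite nth_mkseq //; exact: Hg.
exact: Hf.
Qed.

Lemma img_step (S : Type) (T T' : S -> S) (cod cod' : S -> bool) (P : S -> Prop)
  (h : S -> S) (f : morphism) :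
  (forall y, P y -> P (T' y)) ->
  (forall y, P y -> forall j, j < size (f (cod' y)) ->
      cod (iter j T (h y)) = nth false (f (cod' y)) j) ->
  (forall y, P y -> iter (size (f (cod' y))) T (h y) = h (T' y)) ->
  forall y, P y -> imgp f (fun n => cod' (iter n T' y)) (fun n => cod (iter n T (h y))).
Proof.
move=> HP Hc Hi y Py n; elim: n y Py => [|n IH] y Py i //=.
rewrite mkseq_cons mapply_cons size_cat nth_cat => Hs.
set k := size (f (cod' y)).
case: (ltnP i k) => Hik.
  by rewrite (Hc _ Py).
have Hs' : i - k < size (mapply f (mkseq (fun k0 => cod' (iter k0.+1 T' y)) n)).
  by rewrite ltn_subLR.
move: Hs'.
rewrite (eq_mkseq (fun m => congr1 cod' (iterSr m T' y)) n).
move=> /(IH (T' y) (HP _ Py)) ->.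
by rewrite -(Hi _ Py) -iterD subnK.
Qed.

Definition Z1b (c : mletter) := match c with La | Lb => true | _ => false end.
Definition Z0b (c : mletter) := match c with Lalpha | Lbeta => true | _ => false end.

Lemma mapply_mem f s x y : x \in s -> y \in f x -> y \in mapply f s.
Proof.
elim: s => [|a s IH] //=; rewrite inE mapply_cons mem_cat.
by case/orP => [/eqP <- -> | /IH H /H ->] //; rewrite orbT.
Qed.

Lemma letter_CS c x : x \in phi_letter c x.
Proof. by case: c; case: x. Qed.

Lemma word_CS w x : x \in phi_word w x.
Proof.
elim: w x => [|c w IH] x /=; first by rewrite /mid inE.
exact: (mapply_mem (IH x) (letter_CS c x)).
Qed.

Lemma word_Z1 w : has Z1b w -> false \in phi_word w true.
Proof.
elim: w => [|c w IH] //= /orP [Hc | Hw]; rewrite /mcomp.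
  by apply: (mapply_mem (word_CS w true)); case: c Hc.
exact: (mapply_mem (IH Hw) (letter_CS c false)).
Qed.

Lemma word_Z0 w : has Z0b w -> true \in phi_word w false.
Proof.
elim: w => [|c w IH] //= /orP [Hc | Hw]; rewrite /mcomp.
  by apply: (mapply_mem (word_CS w false)); case: c Hc.
exact: (mapply_mem (IH Hw) (letter_CS c true)).
Qed.

Lemma word_prim w : has Z1b w -> has Z0b w -> primitive_morphism (phi_word w).
Proof.
move=> H1 H0; exists 1 => x y.
rewrite /mpow /= /mcomp /mid mapply_cons /= cats0.
case: x; case: y; rewrite ?word_CS //.
  exact: word_Z1.
exact: word_Z0.
Qed.
Open Scope R_scope.

Definition codL (l0 y : R) : bool :=
  if Rle_dec 0 y then (if Rlt_dec y l0 then false else true) else true.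
Definition codU (l0 y : R) : bool :=
  if Rlt_dec 0 y then (if Rle_dec y l0 then false else true) else true.

Ltac no_dec t := lazymatch t with
  | context [Rlt_dec _ _] => fail | context [Rle_dec _ _] => fail | _ => idtac end.
Ltac split1 := match goal with
 | |- context [Rlt_dec ?a ?b] => no_dec a; no_dec b; destruct (Rlt_dec a b)
 | |- context [Rle_dec ?a ?b] => no_dec a; no_dec b; destruct (Rle_dec a b) end.
Ltac rsolve := repeat (split1; simpl in * ); intros;
  try match goal with H : is_true false |- _ => discriminate H end;
  try match goal with H : is_true (leq _ _) |- _ => vm_compute in H; discriminate H end;
  try reflexivity; try lra; try (exfalso; lra).

Lemma size_le2 c b j : (size (phi_letter c b) <= j.+2)%N.
Proof. by case: c; case: b. Qed.

Ltac lt1 := let y := fresh "y" in let Py := fresh "Py" in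
     move=> y Py; unfold T_lower, T_upper in *; rsolve.
Ltac lt2 := let y := fresh "y" in let Py := fresh "Py" in let j := fresh "j" in
     move=> y Py [|[|j]];
     [ unfold codL, codU, T_lower, T_upper; simpl; rsolve
     | unfold codL, codU, T_lower, T_upper; simpl; rsolve
     | rewrite ltnNge size_le2 // ].
Ltac lt3 := let y := fresh "y" in let Py := fresh "Py" in
     move=> y Py; unfold codL, codU, T_lower, T_upper; simpl; rsolve.

Lemma low_b l0 l1 y z : 0 < l1 < l0 -> 0 <= y < l0 -> z = y ->
  imgp (phi_letter Lb) (coding_lower (l0-l1) l1 y) (coding_lower l0 l1 z).
Proof.
move=> Hl Hy ->.
apply: (img_step (T:=T_lower l0 l1) (T':=T_lower (l0-l1) l1) (cod:=codL l0)
  (cod':=codL (l0-l1)) (P:=fun y => 0<=y<l0) (h:=fun y => y)); [lt1|lt2|lt3|assumption].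
Qed.

Lemma low_a l0 l1 y z : 0 < l1 < l0 -> 0 <= y < l0 -> z = y + l1 ->
  imgp (phi_letter La) (coding_lower (l0-l1) l1 y) (coding_lower l0 l1 z).
Proof.
move=> Hl Hy ->.
apply: (img_step (T:=T_lower l0 l1) (T':=T_lower (l0-l1) l1) (cod:=codL l0)
  (cod':=codL (l0-l1)) (P:=fun y => 0<=y<l0) (h:=fun y => y + l1)); [lt1|lt2|lt3|assumption].
Qed.

Lemma low_beta l0 l1 y z : 0 < l0 < l1 -> 0 <= y < l1 -> z = y + l0 ->
  imgp (phi_letter Lbeta) (coding_lower l0 (l1-l0) y) (coding_lower l0 l1 z).
Proof.
move=> Hl Hy ->.
apply: (img_step (T:=T_lower l0 l1) (T':=T_lower l0 (l1-l0)) (cod:=codL l0)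
  (cod':=codL l0) (P:=fun y => 0<=y<l1) (h:=fun y => y + l0)); [lt1|lt2|lt3|assumption].
Qed.

Lemma low_alpha l0 l1 y z : 0 < l0 < l1 -> 0 <= y < l1 -> z = y ->
  imgp (phi_letter Lalpha) (coding_lower l0 (l1-l0) y) (coding_lower l0 l1 z).
Proof.
move=> Hl Hy ->.
apply: (img_step (T:=T_lower l0 l1) (T':=T_lower l0 (l1-l0)) (cod:=codL l0)
  (cod':=codL l0) (P:=fun y => 0<=y<l1) (h:=fun y => y)); [lt1|lt2|lt3|assumption].
Qed.

Lemma up_b l0 l1 y z : 0 < l1 < l0 -> 0 < y <= l0 -> z = y ->
  imgp (phi_letter Lb) (coding_upper (l0-l1) l1 y) (coding_upper l0 l1 z).
Proof.
move=> Hl Hy ->.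
apply: (img_step (T:=T_upper l0 l1) (T':=T_upper (l0-l1) l1) (cod:=codU l0)
  (cod':=codU (l0-l1)) (P:=fun y => 0<y<=l0) (h:=fun y => y)); [lt1|lt2|lt3|assumption].
Qed.

Lemma up_a l0 l1 y z : 0 < l1 < l0 -> 0 < y <= l0 -> z = y + l1 ->
  imgp (phi_letter La) (coding_upper (l0-l1) l1 y) (coding_upper l0 l1 z).
Proof.
move=> Hl Hy ->.
apply: (img_step (T:=T_upper l0 l1) (T':=T_upper (l0-l1) l1) (cod:=codU l0)
  (cod':=codU (l0-l1)) (P:=fun y => 0<y<=l0) (h:=fun y => y + l1)); [lt1|lt2|lt3|assumption].
Qed.

Lemma up_beta l0 l1 y z : 0 < l0 < l1 -> 0 < y <= l1 -> z = y + l0 ->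
  imgp (phi_letter Lbeta) (coding_upper l0 (l1-l0) y) (coding_upper l0 l1 z).
Proof.
move=> Hl Hy ->.
apply: (img_step (T:=T_upper l0 l1) (T':=T_upper l0 (l1-l0)) (cod:=codU l0)
  (cod':=codU l0) (P:=fun y => 0<y<=l1) (h:=fun y => y + l0)); [lt1|lt2|lt3|assumption].
Qed.

Lemma up_alpha l0 l1 y z : 0 < l0 < l1 -> 0 < y <= l1 -> z = y ->
  imgp (phi_letter Lalpha) (coding_upper l0 (l1-l0) y) (coding_upper l0 l1 z).
Proof.
move=> Hl Hy ->.
apply: (img_step (T:=T_upper l0 l1) (T':=T_upper l0 (l1-l0)) (cod:=codU l0)
  (cod':=codU l0) (P:=fun y => 0<y<=l1) (h:=fun y => y)); [lt1|lt2|lt3|assumption].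
Qed.

Lemma iterL_scale k l0 l1 y n : 0 < k ->
  iter n (T_lower (k*l0) (k*l1)) (k*y) = k * iter n (T_lower l0 l1) y.
Proof.
move=> Hk; elim: n => [|n IH] //=; rewrite IH /T_lower.
set x := iter n _ y.
destruct (Rlt_dec (k*x) (k*l0)); destruct (Rlt_dec x l0); simpl; try ring; exfalso; nra.
Qed.

Lemma iterU_scale k l0 l1 y n : 0 < k ->
  iter n (T_upper (k*l0) (k*l1)) (k*y) = k * iter n (T_upper l0 l1) y.
Proof.
move=> Hk; elim: n => [|n IH] //=; rewrite IH /T_upper.
set x := iter n _ y.
destruct (Rle_dec (k*x) (k*l0)); destruct (Rle_dec x l0); simpl; try ring; exfalso; nra.
Qed.

Lemma codingL_scale k l0 l1 y n : 0 < k ->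
  coding_lower (k*l0) (k*l1) (k*y) n = coding_lower l0 l1 y n.
Proof.
move=> Hk; rewrite /coding_lower iterL_scale //.
set x := iter n _ y.
destruct (Rle_dec 0 (k*x)); destruct (Rle_dec 0 x);
destruct (Rlt_dec (k*x) (k*l0)); destruct (Rlt_dec x l0); simpl; try reflexivity; exfalso; nra.
Qed.

Lemma codingU_scale k l0 l1 y n : 0 < k ->
  coding_upper (k*l0) (k*l1) (k*y) n = coding_upper l0 l1 y n.
Proof.
move=> Hk; rewrite /coding_upper iterU_scale //.
set x := iter n _ y.
destruct (Rlt_dec 0 (k*x)); destruct (Rlt_dec 0 x);
destruct (Rle_dec (k*x) (k*l0)); destruct (Rle_dec x l0); simpl; try reflexivity; exfalso; nra.
Qed.
Open Scope R_scope.

Lemma irr_ne1 x : irrational x -> x <> 1.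
Proof. move=> H E; apply: H; exists 1%Z, 1%Z; split; [lia| rewrite E /=; field]. Qed.

Lemma irr_sub1 x : irrational x -> irrational (x - 1).
Proof.
move=> H [p [q [Hq E]]]; apply: H; exists (p + q)%Z, q; split => //.
have Hq' : IZR q <> 0 by apply: not_0_IZR.
rewrite plus_IZR; have -> : x = (x - 1) + 1 by ring.
rewrite E; field; exact Hq'.
Qed.

Lemma irr_frac x : irrational x -> irrational (x / (1 - x)).
Proof.
move=> H [p [q [Hq E]]]; apply H.
have Hx1 : 1 - x <> 0 by have := irr_ne1 H; lra.
have Hq' : IZR q <> 0 by apply: not_0_IZR.
have Hpq : (p + q)%Z <> 0%Z.
  move=> Hpq; have Hp : IZR p = - IZR q by rewrite -opp_IZR; f_equal; lia.
  have E' : x / (1 - x) = -1 by rewrite E Hp; field.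
  have : x = (x / (1 - x)) * (1 - x) by field.
  rewrite E'; lra.
exists p, (p + q)%Z; split => //.
have Hpq' : IZR (p + q) <> 0 by apply: not_0_IZR.
rewrite plus_IZR in Hpq' *.
have -> : x = (x / (1 - x)) / (1 + x / (1 - x)).
  field; split => //. 
  have -> : 1 - x + x = 1 by ring. lra.
rewrite E; field; split => //.
Qed.

Lemma irr_inv x : irrational x -> irrational (1 / x).
Proof.
move=> H [p [q [Hq E]]]; apply H.
have Hx : x <> 0 by move=> Hx; apply: H; exists 0%Z, 1%Z; split; [lia| rewrite Hx /=; field].
have Hp : p <> 0%Z.
  move=> Hp; rewrite Hp /= in E.
  have : 1 = x * (1 / x) by field.
  rewrite E; lra.
exists q, p; split => //.
have Hp' : IZR p <> 0 by apply: not_0_IZR.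
have Hq' : IZR q <> 0 by apply: not_0_IZR.
have -> : x = 1 / (1 / x) by field.
rewrite E; field; split => //.
Qed.

Definition lstep (p : R * R) : R * R :=
  if Rlt_dec p.2 p.1 then (p.1 - p.2, p.2) else (p.1, p.2 - p.1).

Definition state := ((R * R) * R * (Z * Z * Z))%type.

Definition nstep (s : state) : state :=
  let: (p, c, (A, B, C)) := s in
  if Rlt_dec p.2 p.1 then (lstep p, c / (1 - c), (A + B + C, B + 2 * C, C)%Z)
  else (lstep p, c - 1, (A, B + 2 * A, A + B + C)%Z).

Definition Inv (D : Z) (s : state) : Prop :=
  let: (p, c, (A, B, C)) := s in
  0 < p.1 /\ 0 < p.2 /\ c < 0 /\ irrational (p.2 / p.1) /\ A <> 0%Z /\
  IZR B = - IZR A * (p.2 / p.1 + c) /\ IZR C = IZR A * (p.2 / p.1) * c /\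
  (B * B - 4 * A * C = D)%Z.

Lemma nstep_fst s : (nstep s).1.1 = lstep s.1.1.
Proof.
case: s => [[p c] [[A B] C]] /=; by case: (Rlt_dec p.2 p.1).
Qed.

Lemma iter_nstep_fst n s : (iter n nstep s).1.1 = iter n lstep s.1.1.
Proof. by elim: n => [|n IH] //=; rewrite nstep_fst IH. Qed.

Lemma Inv_step D s : Inv D s -> Inv D (nstep s).
Proof.
case: s => [[[l0 l1] c] [[A B] C]].
rewrite /Inv /nstep /lstep; cbv beta iota zeta delta [fst snd].
move=> [H0 [H1 [Hc [Hirr [HA [HB [HC HD]]]]]]].
have HA' : IZR A <> 0 by apply: not_0_IZR.
set x := l1 / l0 in Hirr HB HC.
have Hl1 : l1 = x * l0 by rewrite /x; field; lra.
have Hx0 : 0 < x by rewrite /x; apply: Rdiv_lt_0_compat.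
have Hx1 := irr_ne1 Hirr.
case: (Rlt_dec l1 l0) => Hlt; cbv beta iota zeta delta [fst snd is_left].
- have Hxl : x < 1 by rewrite Hl1 in Hlt; nra.
  have Hr : l1 / (l0 - l1) = x / (1 - x) by rewrite Hl1; field; split; lra.
  rewrite Hr.
  have HA'' : IZR (A + B + C) = IZR A * (1 - x) * (1 - c)
    by rewrite !plus_IZR HB HC; ring.
  have HAn : IZR (A + B + C) <> 0.
    rewrite HA''; apply: Rmult_integral_contrapositive; split;
      [apply: Rmult_integral_contrapositive; split|]; lra.
  split; first lra. split; first lra.
  split. have : 0 < 1 - c by lra. move=> H1c.
    have : c / (1 - c) = - ((- c) / (1 - c)) by field; lra.
    move=> ->; have := Rdiv_lt_0_compat (-c) (1-c); lra.
  split; first exact: irr_frac.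
  split; first by move=> E; apply: HAn; rewrite E.
  split. rewrite plus_IZR mult_IZR HA'' HB HC /=; field; split; lra.
  split. rewrite HA'' HC; field; split; lra.
  rewrite -HD; ring.
- have Hxl : 1 < x.
    have : l1 <> l0 by move=> E; apply: Hx1; rewrite /x E; field; lra.
    move=> Hne; have : l0 < l1 by lra. rewrite Hl1 => H; nra.
  have Hr : (l1 - l0) / l0 = x - 1 by rewrite Hl1; field; lra.
  rewrite Hr.
  split; first lra. split; first nra. split; first lra.
  split; first exact: irr_sub1.
  split => //.
  split. rewrite plus_IZR mult_IZR HB /=; ring.
  split. rewrite !plus_IZR HB HC; ring.
  rewrite -HD; ring.
Qed.

Definition ratio (s : state) : R := s.1.1.2 / s.1.1.1.
Definition conj (s : state) : R := s.1.2.

Lemma Inv_unfold D l0 l1 c A B C : Inv D ((l0, l1), c, (A, B, C)) <->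
  0 < l0 /\ 0 < l1 /\ c < 0 /\ irrational (l1 / l0) /\ A <> 0%Z /\
  IZR B = - IZR A * (l1 / l0 + c) /\ IZR C = IZR A * (l1 / l0) * c /\
  (B * B - 4 * A * C = D)%Z.
Proof. by []. Qed.

Lemma Inv_bounds D l0 l1 c A B C : Inv D ((l0, l1), c, (A, B, C)) ->
  (0 <= D /\ - D <= A <= D /\ - D <= B <= D /\ - D <= C <= D)%Z.
Proof.
move/Inv_unfold => [H0 [H1 [Hc [Hirr [HA [HB [HC HD]]]]]]].
have HA' : IZR A <> 0 by apply: not_0_IZR.
have Hx : 0 < l1 / l0 by apply: Rdiv_lt_0_compat.
have HAC : (A * C < 0)%Z.
  apply: lt_IZR; rewrite mult_IZR HC /=.
  have HAA : 0 < IZR A * IZR A by nra.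
  have Hxc : l1 / l0 * c < 0 by nra.
  have -> : IZR A * (IZR A * (l1 / l0) * c) = (IZR A * IZR A) * (l1 / l0 * c) by ring.
  nra.
have HBB : (0 <= B * B)%Z by nia.
have HAb : (Z.abs A <= - (A * C))%Z.
  case: (Z_lt_le_dec 0 A) => HA0.
  - have : (C < 0)%Z by nia. move=> HC0.
    rewrite Z.abs_eq; [nia|lia].
  - have : (A < 0)%Z by lia. move=> HA1. have : (0 < C)%Z by nia. move=> HC0.
    rewrite Z.abs_neq; [nia|lia].
have HCb : (Z.abs C <= - (A * C))%Z.
  case: (Z_lt_le_dec 0 C) => HC0.
  - have : (A < 0)%Z by nia. move=> HA0.
    rewrite Z.abs_eq; [nia|lia].
  - have : (C < 0)%Z by nia. move=> HC1. have : (0 < A)%Z by nia. move=> HA0.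
    rewrite Z.abs_neq; [nia|lia].
have HBb : (Z.abs B <= B * B)%Z.
  case: (Z_lt_le_dec 0 B) => HB0.
  - rewrite Z.abs_eq; [nia|lia].
  - case: (Z.eq_dec B 0) => HB1; first by subst; simpl; lia.
    rewrite Z.abs_neq; [nia|lia].
lia.
Qed.

Lemma Inv_det D l0 l1 c A B C l0' l1' c' : Inv D ((l0, l1), c, (A, B, C)) ->
  Inv D ((l0', l1'), c', (A, B, C)) -> l1 / l0 = l1' / l0' /\ c = c'.
Proof.
move/Inv_unfold => [H0 [H1 [Hc [Hirr [HA [HB [HC HD]]]]]]].
move/Inv_unfold => [H0' [H1' [Hc' [Hirr' [_ [HB' [HC' _]]]]]]].
have HA' : IZR A <> 0 by apply: not_0_IZR.
set x := l1 / l0 in HB HC *; set y := l1' / l0' in HB' HC' *.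
have Hy : 0 < y by apply: Rdiv_lt_0_compat.
have E : IZR A * (y - x) * (y - c) = 0.
  have -> : IZR A * (y - x) * (y - c) = IZR A * y * y + IZR B * y + IZR C
    by rewrite HB HC; ring.
  rewrite HB' HC'; ring.
have Exy : y = x.
  case: (Rmult_integral _ _ E) => [E'|E']; last lra.
  case: (Rmult_integral _ _ E') => [E''|E'']; [contradiction|lra].
split; first by rewrite Exy.
rewrite Exy in HB'; rewrite HB in HB'.
apply: (Rmult_eq_reg_l (- IZR A)); [lra|].
have : - IZR A <> 0 by move=> E1; apply: HA'; lra.
move=> _; nra.
Qed.

Lemma frac_inj a b : a <> 1 -> b <> 1 -> a / (1 - a) = b / (1 - b) -> a = b.
Proof.
move=> Ha Hb E.
have Ha' : 1 - a <> 0 by lra. have Hb' : 1 - b <> 0 by lra.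
have : a * (1 - b) = b * (1 - a).
  have -> : a * (1 - b) = (a / (1 - a)) * ((1 - a) * (1 - b)) by field.
  rewrite E; field; done.
lra.
Qed.

Lemma frac_gt c : c < 0 -> -1 < c / (1 - c).
Proof.
move=> Hc.
have -> : c / (1 - c) = -1 + 1 / (1 - c) by field; lra.
have : 0 < 1 / (1 - c) by apply: Rdiv_lt_0_compat; lra.
lra.
Qed.

Lemma ratio_lt l0 l1 : 0 < l0 -> l1 < l0 -> l1 / (l0 - l1) = (l1 / l0) / (1 - l1 / l0).
Proof. move=> H0 H; field; split; lra. Qed.

Lemma ratio_gt l0 l1 : 0 < l0 -> (l1 - l0) / l0 = l1 / l0 - 1.
Proof. move=> H0; field; lra. Qed.

Lemma Inv_inj D s1 s2 : Inv D s1 -> Inv D s2 ->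
  ratio (nstep s1) = ratio (nstep s2) -> conj (nstep s1) = conj (nstep s2) ->
  ratio s1 = ratio s2 /\ conj s1 = conj s2.
Proof.
case: s1 => [[[l0 l1] c] [[A B] C]]; case: s2 => [[[l0' l1'] c'] [[A' B'] C']].
move=> /Inv_unfold [H0 [H1 [Hc [Hirr _]]]] /Inv_unfold [H0' [H1' [Hc' [Hirr' _]]]].
have Hx1 := irr_ne1 Hirr; have Hx1' := irr_ne1 Hirr'.
rewrite /ratio /conj /nstep /lstep; cbv beta iota zeta delta [fst snd].
case: (Rlt_dec l1 l0) => Hlt; case: (Rlt_dec l1' l0') => Hlt';
  cbv beta iota zeta delta [fst snd is_left].
- rewrite (ratio_lt H0 Hlt) (ratio_lt H0' Hlt') => Er Ec.
  split; [apply: (frac_inj _ _ Er) | apply: (frac_inj _ _ Ec)]; lra.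
- move=> Er Ec.
  have := frac_gt Hc; lra.
- move=> Er Ec.
  have := frac_gt Hc'; lra.
- rewrite (ratio_gt l1 H0) (ratio_gt l1' H0') => Er Ec; split; lra.
Qed.

Lemma Inv_det' D s1 s2 : Inv D s1 -> Inv D s2 -> s1.2 = s2.2 ->
  ratio s1 = ratio s2 /\ conj s1 = conj s2.
Proof.
case: s1 => [[[l0 l1] c] [[A B] C]]; case: s2 => [[[l0' l1'] c'] [[A' B'] C']] /=.
move=> H1 H2 [EA EB EC]; subst A' B' C'.
exact: (Inv_det H1 H2).
Qed.

Lemma Inv_iter D s n : Inv D s -> Inv D (iter n nstep s).
Proof. move=> H; elim: n => [|n IH] //=; exact: Inv_step. Qed.

Lemma Inv_bounds' D s : Inv D s ->
  (0 <= D /\ - D <= s.2.1.1 <= D /\ - D <= s.2.1.2 <= D /\ - D <= s.2.2 <= D)%Z.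
Proof. case: s => [[[l0 l1] c] [[A B] C]] /=; exact: Inv_bounds. Qed.

Lemma back D s0 i p : Inv D s0 ->
  ratio (iter (i + p) nstep s0) = ratio (iter i nstep s0) ->
  conj (iter (i + p) nstep s0) = conj (iter i nstep s0) ->
  ratio (iter p nstep s0) = ratio s0 /\ conj (iter p nstep s0) = conj s0.
Proof.
move=> H0; elim: i => [|i IH] //.
rewrite addSn !iterS => Er Ec; apply: IH.
- have := Inv_inj (Inv_iter (i + p) H0) (Inv_iter i H0) Er Ec. by case.
- have := Inv_inj (Inv_iter (i + p) H0) (Inv_iter i H0) Er Ec. by case.
Qed.

Definition enc (D : Z) (s : state) : nat * (nat * nat) :=
  (Z.to_nat (s.2.1.1 + D), (Z.to_nat (s.2.1.2 + D), Z.to_nat (s.2.2 + D))).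

Lemma enc_inj D s1 s2 : Inv D s1 -> Inv D s2 -> enc D s1 = enc D s2 -> s1.2 = s2.2.
Proof.
move=> /Inv_bounds' H1 /Inv_bounds' H2 [EA EB EC].
apply Z2Nat.inj in EA; try lia. apply Z2Nat.inj in EB; try lia. apply Z2Nat.inj in EC; try lia.
case: s1 H1 EA EB EC => [p1 [[A1 B1] C1]]; case: s2 H2 => [p2 [[A2 B2] C2]] /= H2 H1 EA EB EC.
f_equal; [f_equal|]; lia.
Qed.

Lemma enc_mem D s : Inv D s ->
  enc D s \in [seq (a, bc) | a <- iota 0 (Z.to_nat (2 * D + 1)),
                 bc <- [seq (b, c) | b <- iota 0 (Z.to_nat (2 * D + 1)),
                                     c <- iota 0 (Z.to_nat (2 * D + 1))]].
Proof.
move=> /Inv_bounds' H.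
have Hb : forall z, (- D <= z <= D)%Z -> (Z.to_nat (z + D) \in iota 0 (Z.to_nat (2 * D + 1))).
  move=> z Hz; rewrite mem_iota leq0n add0n andTb; apply/ltP; apply Z2Nat.inj_lt; lia.
apply: allpairs_f; first by apply: Hb; lia.
apply: allpairs_f; apply: Hb; lia.
Qed.

Lemma periodic D s0 : Inv D s0 -> exists p, (0 < p)%N /\
  ratio (iter p nstep s0) = ratio s0 /\ conj (iter p nstep s0) = conj s0.
Proof.
move=> H0.
set K := Z.to_nat (2 * D + 1).
set t := [seq (a, bc) | a <- iota 0 K, bc <- [seq (b, c) | b <- iota 0 K, c <- iota 0 K]].
set g := fun n => enc D (iter n nstep s0).
have Hnu : ~~ uniq (mkseq g (size t).+1).
  apply/negP => Hu.
  have Hs : {subset mkseq g (size t).+1 <= t}.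
    move=> x /mapP [n _ ->]; exact: enc_mem (Inv_iter n H0).
  have := uniq_leq_size Hu Hs.
  by rewrite size_mkseq ltnn.
have [i [j [Hij Hj E]]] := uniqPn (0%N, (0%N, 0%N)) Hnu.
rewrite size_mkseq in Hj.
rewrite !nth_mkseq // in E; last exact: ltn_trans Hij Hj.
have E2 := enc_inj (Inv_iter i H0) (Inv_iter j H0) E.
have [Er Ec] := Inv_det' (Inv_iter j H0) (Inv_iter i H0) (esym E2).
exists (j - i)%N; split; first by rewrite subn_gt0.
apply: (back (i := i) H0); rewrite subnKC //; exact: ltnW.
Qed.
Open Scope R_scope.

Definition pick (cA cB : mletter) (p : R * R) : mletter :=
  if Rlt_dec p.2 p.1 then cA else cB.

Fixpoint wseq (cA cB : mletter) (n : nat) (p : R * R) : seq mletter :=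
  match n with
  | 0 => [::]
  | n'.+1 => pick cA cB p :: wseq cA cB n' (lstep p)
  end.

Lemma mapply_mid s : mapply mid s = s.
Proof. by elim: s => [|a s IH] //=; rewrite mapply_cons IH. Qed.

Lemma imgp_id v : imgp mid v v.
Proof. by move=> n i; rewrite mapply_mid size_mkseq => Hi; rewrite nth_mkseq. Qed.

Lemma chain (C : R -> R -> R -> nat -> bool) cA cB (rf : R -> R -> R) :
  (forall a b, 0 < b < a -> imgp (phi_letter cA) (C (a-b) b (rf (a-b) b)) (C a b (rf a b))) ->
  (forall a b, 0 < a < b -> imgp (phi_letter cB) (C a (b-a) (rf a (b-a))) (C a b (rf a b))) ->
  forall n p, (forall k, (k < n)%N -> 0 < (iter k lstep p).1 /\ 0 < (iter k lstep p).2 /\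
                 (iter k lstep p).1 <> (iter k lstep p).2) ->
  imgp (phi_word (wseq cA cB n p))
    (C (iter n lstep p).1 (iter n lstep p).2 (rf (iter n lstep p).1 (iter n lstep p).2))
    (C p.1 p.2 (rf p.1 p.2)).
Proof.
move=> H1 H2; elim=> [|n IH] p Hk; first exact: imgp_id.
have [Hp1 [Hp2 Hne]] := Hk 0%N isT.
rewrite /= in Hp1 Hp2 Hne.
rewrite iterSr /=.
apply: (imgp_comp (v := C (lstep p).1 (lstep p).2 (rf (lstep p).1 (lstep p).2))).
- rewrite /pick /lstep; case: (Rlt_dec p.2 p.1) => H /=.
  + apply: H1; lra.
  + apply: H2; lra.
- apply: IH => k Hkn; rewrite -iterSr; exact: Hk.
Qed.

Lemma mletter_eqb_refl c : mletter_eqb c c.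
Proof. by case: c. Qed.

Lemma wseq_over cA cB n p : word_over [:: cA; cB] (wseq cA cB n p).
Proof.
elim: n p => [|n IH] p //=; rewrite /word_over /= in IH *.
rewrite IH andbT /pick; case: (Rlt_dec p.2 p.1) => _ /=;
  by rewrite mletter_eqb_refl ?orbT.
Qed.

Lemma wseq_has (Pr : pred mletter) cA cB n p k : (k < n)%N ->
  Pr (pick cA cB (iter k lstep p)) -> has Pr (wseq cA cB n p).
Proof.
elim: n p k => [|n IH] p [|k] //= Hk HP.
- by rewrite HP.
- by rewrite (IH (lstep p) k) ?orbT // -iterSr.
Qed.

Lemma Inv_pos D s : Inv D s -> 0 < s.1.1.1 /\ 0 < s.1.1.2 /\ s.1.1.1 <> s.1.1.2.
Proof.
case: s => [[[l0 l1] c] [[A B] C]] /Inv_unfold [H0 [H1 [_ [Hirr _]]]] /=.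
split => //; split => // E; apply: (irr_ne1 Hirr); rewrite E; field; lra.
Qed.

Lemma lt1 l0 l1 : 0 < l1 < l0 -> l1 / l0 < l1 / (l0 - l1).
Proof.
move=> H; apply: Rmult_lt_compat_l; first lra.
apply: Rinv_lt_contravar; nra.
Qed.

Lemma gt1 l0 l1 : 0 < l0 -> (l1 - l0) / l0 < l1 / l0.
Proof.
move=> H; rewrite ratio_gt //; lra.
Qed.

Lemma ratio_step D s : Inv D s ->
  (s.1.1.2 < s.1.1.1 -> ratio s < ratio (nstep s)) /\
  (~ s.1.1.2 < s.1.1.1 -> ratio (nstep s) < ratio s).
Proof.
case: s => [[[l0 l1] c] [[A B] C]] /Inv_unfold [H0 [H1 _]].
rewrite /ratio /nstep /lstep; cbv beta iota zeta delta [fst snd].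
split => H; case: (Rlt_dec l1 l0) => Hlt; cbv beta iota zeta delta [fst snd is_left];
  try contradiction.
- apply: Rmult_lt_compat_l => //; apply: Rinv_lt_contravar; nra.
all: first [apply: lt1; lra | apply: gt1; lra].
Qed.

Lemma kinds D s0 p : Inv D s0 -> (0 < p)%N -> ratio (iter p nstep s0) = ratio s0 ->
  (exists k, (k < p)%N /\ (iter k nstep s0).1.1.2 < (iter k nstep s0).1.1.1) /\
  (exists k, (k < p)%N /\ ~ (iter k nstep s0).1.1.2 < (iter k nstep s0).1.1.1).
Proof.
move=> H0 Hp Er.
case: p Hp Er => [|p] // _ Er.
split; apply: NNPP => Hn.
- have Hall : forall k, (k <= p)%N -> ~ (iter k nstep s0).1.1.2 < (iter k nstep s0).1.1.1.
    by move=> k Hk HP; apply: Hn; exists k.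
  have Hm : forall m, (m <= p)%N -> ratio (iter m nstep s0) <= ratio s0.
    elim=> [|m IH] Hm; first by apply: Rle_refl.
    have := (ratio_step (Inv_iter m H0)).2 (Hall m (ltnW Hm)).
    have := IH (ltnW Hm). rewrite iterS; lra.
  have := (ratio_step (Inv_iter p H0)).2 (Hall p (leqnn p)).
  have := Hm p (leqnn p). rewrite -iterS Er; lra.
- have Hall : forall k, (k <= p)%N -> (iter k nstep s0).1.1.2 < (iter k nstep s0).1.1.1.
    by move=> k Hk; apply: NNPP => HP; apply: Hn; exists k.
  have Hm : forall m, (m <= p)%N -> ratio s0 <= ratio (iter m nstep s0).
    elim=> [|m IH] Hm; first by apply: Rle_refl.
    have := (ratio_step (Inv_iter m H0)).1 (Hall m (ltnW Hm)).
    have := IH (ltnW Hm). rewrite iterS; lra.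
  have := (ratio_step (Inv_iter p H0)).1 (Hall p (leqnn p)).
  have := Hm p (leqnn p). rewrite -iterS Er; lra.
Qed.
Open Scope R_scope.

Lemma master (C : R -> R -> R -> nat -> bool) cA cB (rf : R -> R -> R) D s0 u :
  (forall a b, 0 < b < a -> imgp (phi_letter cA) (C (a-b) b (rf (a-b) b)) (C a b (rf a b))) ->
  (forall a b, 0 < a < b -> imgp (phi_letter cB) (C a (b-a) (rf a (b-a))) (C a b (rf a b))) ->
  (forall k a b n, 0 < k -> C (k*a) (k*b) (rf (k*a) (k*b)) n = C a b (rf a b) n) ->
  Z1b cA -> Z0b cB -> Inv D s0 ->
  (forall n, u n = C s0.1.1.1 s0.1.1.2 (rf s0.1.1.1 s0.1.1.2) n) ->
  exists w, word_over [:: cA; cB] w /\ primitive_morphism (phi_word w) /\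
    fixed_by (phi_word w) u.
Proof.
move=> H1 H2 Hs ZA ZB H0 Hu.
have [p [Hp [Er _]]] := periodic H0.
have [[kA [HkA HA]] [kB [HkB HB]]] := kinds H0 Hp Er.
exists (wseq cA cB p s0.1.1); split; first exact: wseq_over.
split.
  apply: word_prim.
  - apply: (wseq_has (k := kA)) => //.
    by rewrite -iter_nstep_fst /pick; case: Rlt_dec.
  - apply: (wseq_has (k := kB)) => //.
    by rewrite -iter_nstep_fst /pick; case: Rlt_dec.
have Hch := chain H1 H2 (n := p) (p := s0.1.1).
have Hq : forall k, (k < p)%N -> 0 < (iter k lstep s0.1.1).1 /\ 0 < (iter k lstep s0.1.1).2 /\
                 (iter k lstep s0.1.1).1 <> (iter k lstep s0.1.1).2.
  move=> k _; rewrite -iter_nstep_fst; exact: Inv_pos (Inv_iter k H0).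
have {Hch} Hch := Hch Hq.
set q := iter p lstep s0.1.1 in Hch.
have [Hq1 [Hq2 _]] : 0 < q.1 /\ 0 < q.2 /\ q.1 <> q.2
  by rewrite /q -iter_nstep_fst; exact: Inv_pos (Inv_iter p H0).
have [HP1 [HP2 _]] := Inv_pos H0.
have Er' : q.2 / q.1 = s0.1.1.2 / s0.1.1.1 by rewrite /q -iter_nstep_fst; exact: Er.
set k := q.1 / s0.1.1.1.
have Hk : 0 < k by apply: Rdiv_lt_0_compat.
have E1 : q.1 = k * s0.1.1.1 by rewrite /k; field; lra.
have E2 : q.2 = k * s0.1.1.2.
  have -> : q.2 = (q.2 / q.1) * q.1 by field; lra.
  rewrite Er' E1 /k; field; lra.
apply: (imgp_ext Hch) => n; last by rewrite Hu.
by rewrite E1 E2 Hs // Hu.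
Qed.

Lemma scaleL k a b y n : 0 < k -> y = k * (y / k) ->
  coding_lower (k*a) (k*b) y n = coding_lower a b (y / k) n.
Proof. move=> Hk E; rewrite {1}E; exact: codingL_scale. Qed.

Lemma scaleU k a b y n : 0 < k -> y = k * (y / k) ->
  coding_upper (k*a) (k*b) y n = coding_upper a b (y / k) n.
Proof. move=> Hk E; rewrite {1}E; exact: codingU_scale. Qed.

Lemma init theta thetabar l0 l1 :
  quad_irrational_with_conj theta thetabar ->
  0 < theta < 1 -> thetabar < 0 ->
  (l0 = 1 /\ l1 = theta) \/ (l0 = theta /\ l1 = 1) ->
  exists D s0, Inv D s0 /\ s0.1.1 = (l0, l1).
Proof.
move=> [Hirr [a [b [c [Ha [Heq Hbar]]]]]] Hth Hbar0 Hl.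
have Ha' : IZR a <> 0 by apply: not_0_IZR.
have HB : IZR b = - IZR a * (theta + thetabar) by rewrite Hbar; field.
have HC : IZR c = IZR a * theta * thetabar.
  have -> : IZR c = - IZR a * theta ^ 2 - IZR b * theta by lra.
  rewrite HB; ring.
case: Hl => [[-> ->] | [-> ->]].
- exists (b * b - 4 * a * c)%Z, ((1, theta), thetabar, (a, b, c)); split => //.
  apply/Inv_unfold; have -> : theta / 1 = theta by field.
  do 3 (split; first lra). split; first exact: Hirr. split; first exact: Ha.
  split; first by rewrite HB. split; first by rewrite HC. done.
- have Hc : c <> 0%Z.
    move=> E; have : IZR c = 0 by rewrite E. rewrite HC.
    have : IZR a * theta * thetabar <> 0.
      apply: Rmult_integral_contrapositive; split; [apply: Rmult_integral_contrapositive; split|]; lra.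
    done.
  exists (b * b - 4 * c * a)%Z, ((theta, 1), 1 / thetabar, (c, b, a)); split => //.
  apply/Inv_unfold.
  split; first lra. split; first lra.
  split. have : 1 / thetabar = - (1 / (- thetabar)) by field; lra.
    move=> ->; have : 0 < 1 / (- thetabar) by apply: Rdiv_lt_0_compat; lra. lra.
  split; first exact: irr_inv.
  split => //.
  split. rewrite HC HB; field; lra.
  split. rewrite HC; field; lra.
  done.
Qed.

Unset Implicit Arguments.

Theorem lemma22 (theta thetabar rho l0 l1 : R) (u : nat -> bool) :
  quad_irrational_with_conj theta thetabar ->
  0 < theta < 1 -> thetabar < 0 ->
  0 <= rho <= 1 + theta ->
  (l0 = 1 /\ l1 = theta) \/ (l0 = theta /\ l1 = 1) ->
  sturmian_param l0 l1 rho u ->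
  (rho = l1 -> exists w, word_over [:: Lb; Lbeta] w /\
      primitive_morphism (phi_word w) /\ fixed_by (phi_word w) u) /\
  (rho = 0 -> exists w, word_over [:: Lb; Lalpha] w /\
      primitive_morphism (phi_word w) /\ fixed_by (phi_word w) u) /\
  (rho = l0 + l1 -> exists w, word_over [:: La; Lbeta] w /\
      primitive_morphism (phi_word w) /\ fixed_by (phi_word w) u) /\
  (rho = l0 -> exists w, word_over [:: La; Lalpha] w /\
      primitive_morphism (phi_word w) /\ fixed_by (phi_word w) u).
Proof.
move=> Hq Hth Hbar Hrho Hl Hst.
have [D [s0 [H0 Hs0]]] := init Hq Hth Hbar Hl.
have Hpos : 0 < l0 /\ 0 < l1 by case: Hl => [[-> ->]|[-> ->]]; lra.
have HuE : forall (C : R -> R -> R -> nat -> bool) (rf : R -> R -> R),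
    rho = rf l0 l1 -> (forall n, u n = C l0 l1 rho n) ->
    forall n, u n = C s0.1.1.1 s0.1.1.2 (rf s0.1.1.1 s0.1.1.2) n.
  by move=> C rf Er Hu n; rewrite Hs0 /= -Er.
split; [|split; [|split]] => Er.
- case: Hst => [[_ Hu] | [_ Hu]].
  + apply: (master (C := coding_lower) (cA := Lb) (cB := Lbeta) (rf := fun a b => b) _ _ _ isT isT H0 (HuE _ _ Er Hu)).
    * move=> a b Hab /=; apply: low_b; lra.
    * move=> a b Hab /=; apply: low_beta; lra.
    * move=> k a b n Hk /=; exact: codingL_scale.
  + apply: (master (C := coding_upper) (cA := Lb) (cB := Lbeta) (rf := fun a b => b) _ _ _ isT isT H0 (HuE _ _ Er Hu)).
    * move=> a b Hab /=; apply: up_b; lra.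
    * move=> a b Hab /=; apply: up_beta; lra.
    * move=> k a b n Hk /=; exact: codingU_scale.
- case: Hst => [[_ Hu] | [Hr _]]; last by exfalso; lra.
  apply: (master (C := coding_lower) (cA := Lb) (cB := Lalpha) (rf := fun a b => 0) _ _ _ isT isT H0 (HuE _ _ Er Hu)).
  * move=> a b Hab /=; apply: low_b; lra.
  * move=> a b Hab /=; apply: low_alpha; lra.
  * move=> k a b n Hk /=; have := codingL_scale a b 0 n Hk; by rewrite Rmult_0_r.
- case: Hst => [[Hr _] | [_ Hu]]; first by exfalso; lra.
  apply: (master (C := coding_upper) (cA := La) (cB := Lbeta) (rf := fun a b => a + b) _ _ _ isT isT H0 (HuE _ _ Er Hu)).
  * move=> a b Hab /=; apply: up_a; lra.
  * move=> a b Hab /=; apply: up_beta; lra.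
  * move=> k a b n Hk /=; rewrite -Rmult_plus_distr_l; exact: codingU_scale.
- case: Hst => [[_ Hu] | [_ Hu]].
  + apply: (master (C := coding_lower) (cA := La) (cB := Lalpha) (rf := fun a b => a) _ _ _ isT isT H0 (HuE _ _ Er Hu)).
    * move=> a b Hab /=; apply: low_a; lra.
    * move=> a b Hab /=; apply: low_alpha; lra.
    * move=> k a b n Hk /=; exact: codingL_scale.
  + apply: (master (C := coding_upper) (cA := La) (cB := Lalpha) (rf := fun a b => a) _ _ _ isT isT H0 (HuE _ _ Er Hu)).
    * move=> a b Hab /=; apply: up_a; lra.
    * move=> a b Hab /=; apply: up_alpha; lra.
    * move=> k a b n Hk /=; exact: codingU_scale.
Qed.
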